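(* For each $i\in\{2,3,4\}$, the families $\mathrm{SLT}_1$ and $\mathrm{REG}_i^Z$ are incomparable, i.e., $\mathrm{SLT}_1\not\subseteq\mathrm{REG}_i^Z$ and $\mathrm{REG}_i^Z\not\subseteq\mathrm{SLT}_1$.
   Context: Strictly locally testable languages: let $V$ be an alphabet and $k\ge1$. For $B,I,E\subseteq V^k$ and $F\subseteq V^{\le k-1}$, $\mathrm{slt}(B,I,E,F)$ is the language over $V$ consisting of all words in $F$ together with all words $a_1\cdots a_n$ ($a_i\in V$, $n\ge k$) with $a_1\cdots a_k\in B$, $a_{j+1}\cdots a_{j+k}\in I$ for all $1\le j\le n-k-1$, and $a_{n-k+1}\cdots a_n\in E$. $\mathrm{SLT}_k$ is the family of languages of this form. For a regular language $L\subseteq V^*$, $\mathrm{State}(L)$ is the minimum number of states of a deterministic finite automaton over $V$ with total transition function accepting $L$; $\mathrm{REG}_n^Z=\{L\text{ regular}:\mathrm{State}(L)\le n\}$. *)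

(* Defs.v *)
From mathcomp Require Import all_boot.
Set Implicit Arguments. Unset Strict Implicit. Unset Printing Implicit Defensive.

(* slt k B I E F: words of length <= k-1 in F, plus words a_1..a_n (n >= k)
   with a_1..a_k in B, a_{j+1}..a_{j+k} in I for 1 <= j <= n-k-1,
   and a_{n-k+1}..a_n in E.  B, I, E are only ever queried on words of
   length k, F only on words of length <= k-1, so arbitrary predicates give
   exactly the family of the paper. *)
Definition slt (V : finType) (k : nat) (B I E F : pred (seq V)) : pred (seq V) :=
  fun w =>
    let n := size w in
    ((n <= k.-1) && F w) ||
    [&& k <= n, B (take k w),
        all (fun j => I (take k (drop j w))) (iota 1 (n - k - 1))
      & E (drop (n - k) w)].

Definition SLT (V : finType) (k : nat) (L : pred (seq V)) : Prop :=
  exists B I E F : pred (seq V), forall w, L w = slt k B I E F w.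

Definition dfa_accepts (V Q : finType) (q0 : Q) (delta : Q -> V -> Q)
  (fin : pred Q) (w : seq V) : bool := fin (foldl delta q0 w).

Definition REGZ (V : finType) (n : nat) (L : pred (seq V)) : Prop :=
  exists (Q : finType) (q0 : Q) (delta : Q -> V -> Q) (fin : pred Q),
    #|Q| <= n /\ forall w, L w = dfa_accepts q0 delta fin w.

(* Main.v *)
Require Import Defs.
From mathcomp Require Import all_boot.
Set Implicit Arguments. Unset Strict Implicit. Unset Printing Implicit Defensive.

Definition la : 'I_3 := @Ordinal 3 0 erefl.
Definition lb : 'I_3 := @Ordinal 3 1 erefl.
Definition lc : 'I_3 := @Ordinal 3 2 erefl.
Definition L1 : pred (seq 'I_3) :=
  slt 1 (fun s => (s == [:: la]) || (s == [:: lb])) (fun s => (s == [:: la]) || (s == [:: lb]))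
        (fun s => (s == [:: la]) || (s == [:: lc])) pred0.
Definition ws (j : 'I_5) : seq 'I_3 :=
  nth [::] [:: [::]; [:: la]; [:: lb]; [:: lc]; [:: la; lc]] j.
Definition cands : seq (seq 'I_3) := [:: [::]; [:: la]; [:: lc]].

Lemma distinguish : [forall j : 'I_5, forall k : 'I_5,
  (j != k) ==> has (fun s => L1 (ws j ++ s) != L1 (ws k ++ s)) cands].
Proof.
apply/forallP => -[[|[|[|[|[|j]]]]] hj]; apply/forallP => -[[|[|[|[|[|k]]]]] hk] //=.
Qed.

Lemma part1 (n : nat) : n <= 4 -> ~ REGZ n L1.
Proof.
move=> hn [Q [q0 [delta [fin [hQ hL]]]]].
pose f (j : 'I_5) := foldl delta q0 (ws j).
have inj : injective f.
  move=> j k hf; case: (eqVneq j k) => // njk.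
  move/forallP: distinguish => /(_ j) /forallP /(_ k); rewrite njk implyTb.
  case/hasP=> s _; move: hf; rewrite !hL /dfa_accepts !foldl_cat.
  by rewrite /f => ->; rewrite eqxx.
have := leq_card _ inj; rewrite card_ord => h5.
have := leq_trans h5 (leq_trans hQ hn); by [].
Qed.

Definition L2 : pred (seq unit) := fun w => ~~ odd (size w).

Lemma foldl_par (w : seq unit) (q : bool) :
  foldl (fun q _ => ~~ q) q w = q (+) odd (size w).
Proof.
elim: w q => [|x w IH] q /=; first by rewrite addbF.
by rewrite IH; case: q; case: (odd (size w)).
Qed.

Lemma part2 : ~ SLT 1 L2.
Proof.
move=> [B [I [E [F H]]]].
have h2 := H [:: tt; tt]; have h3 := H [:: tt; tt; tt];
have h4 := H [:: tt; tt; tt; tt].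
move: h2 h3 h4; rewrite /slt /L2 /=.
by case: (B [:: tt]); case: (I [:: tt]); case: (E [:: tt]).
Qed.

Theorem mainTheorem8 (i : nat) (hi : 2 <= i <= 4) :
  (exists (V : finType) (L : pred (seq V)), SLT 1 L /\ ~ REGZ i L) /\
  (exists (V : finType) (L : pred (seq V)), REGZ i L /\ ~ SLT 1 L).
Proof.
case/andP: hi => h2 h4; split.
  exists ('I_3 : finType), L1; split; last exact: part1.
  by do 4 eexists.
exists (unit : finType), L2; split; last exact: part2.
exists (bool : finType), true, (fun q _ => ~~ q), id; split.
  by rewrite card_bool.
by move=> w; rewrite /dfa_accepts foldl_par.
Qed.
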